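(* Let $r\geq 3$, let $D$ be an $m$-colored semicomplete $r$-partite digraph, let $k\in\{2,3\}$, and let $x,y$ be distinct vertices of $D$. Suppose there exists a directed path from $x$ to $y$ in $D$ that uses exactly $k$ colors, and there is no directed path from $y$ to $x$ in $D$ using at most $k$ colors. Then $d(x,y)\leq 4$.
   Context: A semicomplete $r$-partite digraph ($r\ge 2$) is a digraph whose vertex set is partitioned into $r$ nonempty independent sets (partite sets) such that for any two vertices $u,v$ in different partite sets at least one of the arcs $(u,v)$, $(v,u)$ is present (both may be present); there are no arcs inside a partite set. An $m$-colored digraph is a digraph whose arcs are each assigned one of $m$ colors. A directed path (no repeated vertices) is $j$-colored if its arcs use exactly $j$ distinct colors; it uses at most $k$ colors if it is $j$-colored for some $1\le j\le k$. $d(x,y)$ denotes the minimum number of arcs of a directed path from $x$ to $y$. *)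

(* Defs.v *)
From mathcomp Require Import all_boot.
Set Implicit Arguments. Unset Strict Implicit. Unset Printing Implicit Defensive.

(* A semicomplete r-partite digraph on the finite vertex type T:
   part : T -> 'I_r assigns each vertex its partite set, arc is the arc relation. *)
Definition semicomplete_multipartite (T : finType) (r : nat)
    (part : T -> 'I_r) (arc : rel T) : Prop :=
  [/\ forall i : 'I_r, exists v : T, part v = i,
      forall u v, arc u v -> part u != part v              (* parts independent, no loops *)
    & forall u v, part u != part v -> arc u v || arc v u].

(* x :: p is a directed path (no repeated vertices) from x to y. *)
Definition dpath (T : finType) (arc : rel T) (x y : T) (p : seq T) : bool :=
  [&& path arc x p, uniq (x :: p) & last x p == y].

Definition ncolors (T : finType) (m : nat) (col : T -> T -> 'I_m)
    (x : T) (p : seq T) : nat :=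
  size (undup (pairmap col x p)).

(* d(x,y) <= n : there is a directed x-y path with at most n arcs. *)
Definition dist_le (T : finType) (arc : rel T) (x y : T) (n : nat) : Prop :=
  exists p : seq T, dpath arc x y p /\ size p <= n.

(* Main.v *)
Require Import Defs.
From mathcomp Require Import all_boot.
From mathcomp Require Import zify.

Lemma sub_a (T:eqType) (x a1 a2 a3 a4 b y: T) rest : y \in b :: rest ->
  subseq [:: x; a1; a2; a3; y] [:: x, a1, a2, a3, a4, b & rest].
Proof. move=> Hy.
rewrite -[[:: x; a1; a2; a3; y]]/([:: x; a1; a2; a3] ++ [:: y]).
rewrite -[[:: x, a1, a2, a3, a4, b & rest]]/([:: x; a1; a2; a3] ++ (a4 :: b :: rest)).
by rewrite subseq_cat2l sub1seq inE Hy orbT.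
Qed.

Lemma sub_b (T:eqType) (x a1 a2 a3 a4 b y: T) rest : y \in b :: rest ->
  subseq [:: x; a1; a2; y] [:: x, a1, a2, a3, a4, b & rest].
Proof. move=> Hy.
rewrite -[[:: x; a1; a2; y]]/([:: x; a1; a2] ++ [:: y]).
rewrite -[[:: x, a1, a2, a3, a4, b & rest]]/([:: x; a1; a2] ++ (a3 :: a4 :: b :: rest)).
rewrite subseq_cat2l sub1seq.
by rewrite -[a3 :: a4 :: b :: rest]/([:: a3; a4] ++ b :: rest) mem_cat Hy orbT.
Qed.

Lemma sub_c (T:eqType) (x a1 a2 : T) s : subseq (x :: s) (x :: a1 :: a2 :: s).
Proof.
rewrite -[x :: s]/([:: x] ++ s) -[x :: a1 :: a2 :: s]/([:: x] ++ (a1 :: a2 :: s)).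
by rewrite subseq_cat2l; apply: subseq_trans (subseq_cons _ _) (subseq_cons _ _).
Qed.

Lemma sub_d (T:eqType) (x a1 : T) s : subseq (x :: s) (x :: a1 :: s).
Proof.
rewrite -[x :: s]/([:: x] ++ s) -[x :: a1 :: s]/([:: x] ++ (a1 :: s)).
by rewrite subseq_cat2l subseq_cons.
Qed.

Theorem mainTheorem2 (T : finType) (r m : nat) (part : T -> 'I_r) (arc : rel T)
    (col : T -> T -> 'I_m) (k : nat) (x y : T) :
  3 <= r ->
  semicomplete_multipartite part arc ->
  (k == 2) || (k == 3) ->
  x != y ->
  (exists p : seq T, dpath arc x y p /\ ncolors col x p = k) ->
  ~ (exists q : seq T, [/\ dpath arc y x q, 1 <= ncolors col y q & ncolors col y q <= k]) ->
  dist_le arc x y 4.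
Proof.
move=> _ [_ Hind Hsc] Hk Hxy [p0 [Hp0 _]] Hno.
have Hyx : y != x by rewrite eq_sym.
have k2 : 2 <= k by case/orP: Hk => /eqP ->.
have nyx : ~~ arc y x.
  apply/negP => a; apply: Hno; exists [:: x]; split => //.
  - by rewrite /dpath /= a eqxx inE Hyx.
  - by apply: ltnW.
have [Hpxy|dxy] := eqVneq (part x) (part y); last first.
  case/orP: (Hsc _ _ dxy) => ha; last by rewrite ha in nyx.
  by exists [:: y]; rewrite /dpath /= ha inE Hxy eqxx.
have two : forall c, part c != part x -> arc y c -> arc c x -> False.
  move=> c Hc a1 a2; apply: Hno; exists [:: c; x].
  have cx : c != x by apply: contra Hc => /eqP ->.
  have cy : y != c by apply: contra Hc => /eqP <-; rewrite Hpxy.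
  split.
  - by rewrite /dpath /= a1 a2 !inE eqxx negb_or cy Hyx cx.
  - by rewrite /ncolors /=; case: ifP.
  - by rewrite /ncolors /=; case: ifP => _ //=; apply: leq_trans k2.
have gen : forall c, part c != part x -> (arc x c -> dist_le arc x y 4) ->
    (arc c y -> dist_le arc x y 4) -> dist_le arc x y 4.
  move=> c Hc H1 H2.
  have cx : part x != part c by rewrite eq_sym.
  have cy : part c != part y by rewrite -Hpxy.
  case/orP: (Hsc _ _ cx) => [/H1 //|a1].
  case/orP: (Hsc _ _ cy) => [/H2 //|a2].
  by case: (two c Hc a2 a1).
move: {2}(size p0) (leqnn (size p0)) Hp0 => n.
elim: n p0 => [|n IH] p Hs Hp.
  by exists p; split => //; apply: leq_trans Hs _.
case Ep: p => [|a1 [|a2 [|a3 [|a4 [|b rest]]]]];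
  try by (exists p; split => //; rewrite Ep).
subst p.
move: Hp => /and3P [Hpa Hu /eqP Hl].
move: Hpa => /= /and5P [h1 h2 h3 h4 h5].
move: Hl => /= Hl.
have Hy : y \in b :: rest by rewrite -Hl mem_last.
have d23 : part a2 != part a3 by apply: Hind.
have [E2|N2] := eqVneq (part a2) (part x).
- apply: (gen a3); first by rewrite -E2 eq_sym.
  + move=> a; apply: (IH [:: a3, a4, b & rest]); first by move: Hs => /=; rewrite ltnS => /ltnW.
    by rewrite /dpath (subseq_uniq (@sub_c _ x a1 a2 _) Hu) /= a h4 h5 Hl eqxx.
  + move=> a; exists [:: a1; a2; a3; y]; split => //.
    by rewrite /dpath (subseq_uniq (@sub_a _ x a1 a2 a3 a4 b y rest Hy) Hu) /= h1 h2 h3 a eqxx.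
- apply: (gen a2 N2).
  + move=> a; apply: (IH [:: a2, a3, a4, b & rest]); first by move: Hs => /=; rewrite ltnS.
    by rewrite /dpath (subseq_uniq (@sub_d _ x a1 _) Hu) /= a h3 h4 h5 Hl eqxx.
  + move=> a; exists [:: a1; a2; y]; split => //.
    by rewrite /dpath (subseq_uniq (@sub_b _ x a1 a2 a3 a4 b y rest Hy) Hu) /= h1 h2 a eqxx.
Qed.
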